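(* Let $U$ be a finite universe of $n$ pages, and let $C^0_0=\emptyset$ and $C^1_0,\dots,C^n_0\subseteq U$ be initial configurations with $|C^m_0|=m$ and $C^{m}_0\subset C^{m+1}_0$ for all $0\le m<n$. Then for every request sequence $\sigma$ over $U$, every time $t\ge 0$ and every $1\le m\le n$, we have $C^{m-1}_t(\sigma)\subset C^m_t(\sigma)$.
   Context: Unweighted paging over a finite universe $U$ of $n$ pages with request sequence $\sigma=(\sigma_1,\sigma_2,\dots)$. Fix a total order on $U$ used for tie-breaking. For a page $p$ and time $t$, its next-request time after $t$ is $\min\{s>t:\sigma_s=p\}$ ($=\infty$ if there is none); page $p$ is ''farther in the future'' than $p'$ at time $t$ if its next-request time is larger, or equal and $p$ comes later in the fixed order. For $1\le m\le n$, $\mathrm{FiF}^m$ (Belady's Farthest-in-Future algorithm with cache size $m$) starts from configuration $C^m_0$ with $|C^m_0|=m$; on request $\sigma_t$, if $\sigma_t$ is in its cache it does nothing, and otherwise it loads $\sigma_t$ and evicts the page of its current cache that is farthest in the future (as of time $t-1$, i.e. among next-request times after $t-1$ excluding the current request page which is being loaded). $C^m_t(\sigma)$ denotes the cache of $\mathrm{FiF}^m$ after serving $\sigma_1,\dots,\sigma_t$, and $C^0_t=\emptyset$ for all $t$. *)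

(* Defs.v *)
From mathcomp Require Import all_boot.
Set Implicit Arguments. Unset Strict Implicit. Unset Printing Implicit Defensive.

Section FiF.
Variable U : finType.
(* the fixed total order used for tie-breaking: p < p' iff ord p < ord p'
   (ord is assumed injective in the theorem) *)
Variable ord : U -> nat.
(* the request sequence sigma = (sigma_1, ..., sigma_|s|), sigma_i = nth s (i-1) *)
Variable s : seq U.

(* next-request time of p after time t, i.e. min {u > t | sigma_u = p};
   "infinity" (no further request) is encoded as size s + 1, which exceeds
   every genuine request time.  Only used with t <= size s. *)
Definition next_req (t : nat) (p : U) : nat := t + 1 + index p (drop t s).

Definition farther (t : nat) (p p' : U) : bool :=
  (next_req t p' < next_req t p) ||
  ((next_req t p == next_req t p') && (ord p' < ord p)).

Definition farthest (t : nat) (C : {set U}) : option U :=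
  [pick q in C | [forall q' in C, (q' == q) || farther t q q']].

Definition fif_step (t : nat) (C : {set U}) : {set U} :=
  match onth s t.-1 with
  | None => C
  | Some p =>
      if p \in C then C else
      match farthest t.-1 C with
      | Some q => p |: (C :\ q)
      | None => p |: C
      end
  end.

Fixpoint fif_run (C0 : {set U}) (t : nat) : {set U} :=
  match t with
  | 0 => C0
  | t'.+1 => fif_step t'.+1 (fif_run C0 t')
  end.

Definition cache (init : nat -> {set U}) (m t : nat) : {set U} :=
  if m is 0 then set0 else fif_run (init m) t.

End FiF.

(* Main.v *)
Require Import Defs.
From mathcomp Require Import all_boot.
From mathcomp Require Import zify.
Set Implicit Arguments.

Section Aux.
Variable U : finType.
Variable ord : U -> nat.
Hypothesis ord_inj : injective ord.
Variable s : seq U.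

Definition MM := (\max_(q : U) ord q).+1.
Definition key t q := next_req s t q * MM + ord q.

Lemma ord_lt q : ord q < MM.
Proof. rewrite /MM ltnS; exact: (leq_bigmax q). Qed.

Lemma fartherE t p q : farther ord s t p q = (key t q < key t p).
Proof.
rewrite /farther /key.
have hp := ord_lt p; have hq := ord_lt q.
move: (next_req s t p) (next_req s t q) (ord p) (ord q) MM hp hq => b a y x M hy hx.
case: (ltngtP a b) => h /=.
- symmetry; apply/idP. have : a.+1 * M <= b * M by rewrite leq_mul2r h orbT.
  rewrite mulSn; lia.
- symmetry; apply/negbTE; rewrite -leqNgt.
  have : b.+1 * M <= a * M by rewrite leq_mul2r h orbT.
  rewrite mulSn; lia.
- subst; rewrite ?eqxx /=; lia.
Qed.

Lemma farther_asym t p q : farther ord s t p q -> farther ord s t q p -> False.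
Proof. rewrite !fartherE; lia. Qed.

Definition ismax t (C : {set U}) q :=
  (q \in C) && [forall q' in C, (q' == q) || farther ord s t q q'].

Lemma farthest_spec t C : C != set0 ->
  exists q, farthest ord s t C = Some q /\ ismax t C q.
Proof.
move=> /set0Pn [i0 Hi0].
rewrite /farthest; case: pickP => [q Hq|H]; first by exists q.
exfalso.
case: (arg_maxnP (key t) Hi0) => i Hi Hmax.
have Hi' : i \in C := Hi.
move: (H i); rewrite Hi' /=; move/negP; apply.
apply/forall_inP => j Hj.
have : key t j <= key t i := Hmax j Hj.
rewrite leq_eqVlt => /orP [/eqP E|].
- have : ord j = ord i.
    move: E; rewrite /key => E.
    have hj := ord_lt j; have hi := ord_lt i.
    move: (next_req s t j) (next_req s t i) (ord j) (ord i) MM E hj hi => a b x y M E hx hy.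
    case: (ltngtP a b) => h.
    + have : a.+1 * M <= b * M by rewrite leq_mul2r h orbT.
      rewrite mulSn; lia.
    + have : b.+1 * M <= a * M by rewrite leq_mul2r h orbT.
      rewrite mulSn; lia.
    + subst; lia.
  by move/ord_inj => ->; rewrite eqxx.
- by rewrite fartherE => ->; rewrite orbT.
Qed.

Lemma ismax_uniq t C q q' : ismax t C q -> ismax t C q' -> q = q'.
Proof.
move=> /andP [Hq /forall_inP Hq2] /andP [Hq' /forall_inP Hq'2].
have := Hq2 q' Hq'; have := Hq'2 q Hq.
case/orP => [/eqP -> //|h1]; case/orP => [/eqP -> //|h2].
exfalso; exact: farther_asym h1 h2.
Qed.

Lemma ismax_sub t (A B : {set U}) b : A \subset B -> ismax t B b -> b \in A -> ismax t A b.
Proof.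
move=> /subsetP sAB /andP [_ /forall_inP H] bA.
rewrite /ismax bA /=; apply/forall_inP => q qA; exact: H (sAB _ qA).
Qed.

Lemma step_sub t (A B : {set U}) : A \subset B ->
  fif_step ord s t A \subset fif_step ord s t B.
Proof.
move=> sAB; rewrite /fif_step.
case: (onth s t.-1) => [p|//].
have sAB' := subsetP sAB.
case: ifP => pA; case: ifP => pB.
- by [].
- by rewrite (sAB' _ pA) in pB.
- case: (boolP (A == set0)) => [/eqP ->|An0].
  + case: (farthest _ _ _ _) => [q|]; apply/subsetP => x;
    rewrite !inE ?andbF ?orbF => /eqP -> //.
  + have [a [-> _]] := farthest_spec t.-1 _ An0.
    apply/subsetP => x; rewrite !inE => /orP [/eqP -> //|/andP [_ xA]].
    exact: sAB'.
- case: (boolP (A == set0)) => [/eqP ->|An0].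
    apply/subsetP => x Hx.
    have -> : x = p by move: Hx; case: (farthest _ _ _ set0) => [q|];
      rewrite !inE ?andbF ?orbF => /eqP.
    by case: (farthest _ _ _ B) => [q|]; rewrite !inE eqxx.
  have Bn0 : B != set0.
    apply: contraNneq An0 => E; rewrite -subset0 -E //.
  have [a [-> Ha]] := farthest_spec t.-1 _ An0.
  have [b [-> Hb]] := farthest_spec t.-1 _ Bn0.
  apply/subsetP => x; rewrite !inE => /orP [-> //|/andP [xa xA]].
  apply/orP; right; rewrite (sAB' _ xA) andbT.
  case: (boolP (b \in A)) => bA.
  + by rewrite (ismax_uniq _ _ _ _ (ismax_sub t.-1 sAB Hb bA) Ha).
  + by apply: contraNneq bA => <-.
Qed.

Lemma step_card t (C : {set U}) : C != set0 ->
  #|fif_step ord s t C| = #|C| /\ fif_step ord s t C != set0.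
Proof.
move=> Cn0; rewrite /fif_step.
case: (onth s t.-1) => [p|//].
case: ifP => // pC.
have [q [-> /andP [qC _]]] := farthest_spec t.-1 _ Cn0.
split; last by apply/set0Pn; exists p; rewrite !inE eqxx.
rewrite cardsU1 !inE pC andbF /= add1n.
by rewrite (cardsD1 q C) qC add1n.
Qed.

Lemma run_sub t (A B : {set U}) : A \subset B -> fif_run ord s A t \subset fif_run ord s B t.
Proof. by move=> h; elim: t => //= t IH; apply: step_sub. Qed.

Lemma run_card t (C : {set U}) : C != set0 ->
  #|fif_run ord s C t| = #|C| /\ fif_run ord s C t != set0.
Proof.
move=> h; elim: t => //= t [IH1 IH2].
by have [-> ->] := step_card t.+1 _ IH2.
Qed.
End Aux.

Theorem lemma1 (U : finType) (ord : U -> nat) (ord_inj : injective ord)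
  (init : nat -> {set U})
  (init0 : init 0 = set0)
  (init_card : forall m, m <= #|U| -> #|init m| = m)
  (init_chain : forall m, m < #|U| -> init m \proper init m.+1)
  (s : seq U) (t m : nat) :
  1 <= m <= #|U| ->
  cache ord s init m.-1 t \proper cache ord s init m t.
Proof.
case: m => [//|[|k]] /= Hm.
- rewrite proper0.
  have h1 : init 1 != set0 by rewrite -card_gt0 init_card.
  by have [_ ->] := run_card ord_inj s t _ h1.
  have hk1 : init k.+1 != set0 by rewrite -card_gt0 init_card //; exact: ltnW.
  have hk2 : init k.+2 != set0 by rewrite -card_gt0 init_card.
  have hp := init_chain k.+1 Hm.
  rewrite properEcard run_sub /=; last by move/properP: hp => [].
  have [-> _] := run_card ord_inj s t _ hk1.
  have [-> _] := run_card ord_inj s t _ hk2.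
  by move: hp; rewrite properEcard => /andP [].
  exact: ord_inj.
Qed.
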